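(* Let $d\ge1$ and consider the $d$-dimensional P-RAN process (see context). For $k\ge d+1$ let $P(k)=\lim_{t\to\infty}\mathbb{E}[N_t(k)]/(d+2+t)$, where $N_t(k)$ is the number of vertices of degree $k$ after $t$ steps. Then $$P(d+1)=\frac12,\qquad P(k)=\frac{dk-d^2-d+1}{dk-d^2+d+2}\,P(k-1)\quad\text{for } k>d+1.$$
   Context: P-RAN process in dimension $d$: at step $0$ the graph is a complete graph on $d+2$ vertices and the list $C_0$ consists of its $d+2$ $(d+1)$-cliques. At each step a clique $c$ is chosen uniformly at random from the current list; a new vertex $v$ is added and joined to all $d+1$ vertices of $c$; $c$ remains in the list and the $d+1$ cliques $\{v\}\cup(c\setminus\{u\})$, $u\in c$, are appended. After $t$ steps the graph has $d+2+t$ vertices and the list has $d+2+t(d+1)$ cliques. Every vertex has degree at least $d+1$. *)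

(* Defs.v *)
From HB Require Import structures.
From mathcomp Require Import all_boot all_order all_algebra.
From mathcomp Require Import all_classical all_reals all_analysis.
Set Implicit Arguments. Unset Strict Implicit. Unset Printing Implicit Defensive.
Import Order.TTheory GRing.Theory Num.Theory.
Local Open Scope ring_scope.

(* State of the P-RAN process: vertices are 0 .. nv-1, an edge list,
   and the (ordered) list of (d+1)-cliques. *)
Record pran_state := PState {
  nv : nat;
  edges : seq (nat * nat);
  cliques : seq (seq nat) }.

(* Step 0: complete graph on d+2 vertices and its d+2 (d+1)-cliques. *)
Definition pran_init (d : nat) : pran_state :=
  PState d.+2
    [seq (i, j) | i <- iota 0 d.+2, j <- [seq j <- iota 0 d.+2 | (i < j)%N]]
    [seq [seq x <- iota 0 d.+2 | x != u] | u <- iota 0 d.+2].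

(* One step with chosen clique c: add vertex v, join it to c, keep c in
   the list and append the cliques {v} ∪ (c \ {u}), u ∈ c. *)
Definition pran_step (s : pran_state) (c : seq nat) : pran_state :=
  let v := nv s in
  PState v.+1 (edges s ++ [seq (x, v) | x <- c])
    (cliques s ++ [seq v :: [seq x <- c | x != u] | u <- c]).

Definition pran_deg (s : pran_state) (v : nat) : nat :=
  count (fun e : nat * nat => (e.1 == v) || (e.2 == v)) (edges s).

Definition Ndeg (k : nat) (s : pran_state) : nat :=
  count (fun v => pran_deg s v == k) (iota 0 (nv s)).

(* expect d t f = E[f(state after t steps)], the clique at each step being
   chosen uniformly at random from the current list. *)
Fixpoint pran_expect {R : realType} (d t : nat) (f : pran_state -> R) : R :=
  match t with
  | 0 => f (pran_init d)
  | t'.+1 => pran_expect d t' (fun s =>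
      (size (cliques s))%:R^-1 *
      \sum_(i < size (cliques s)) f (pran_step s (nth [::] (cliques s) i)))
  end.

(* Main.v *)
Require Import Defs.
From HB Require Import structures.
From mathcomp Require Import all_boot all_order all_algebra.
From mathcomp Require Import all_classical all_reals all_analysis.
From mathcomp Require Import zify ring lra.
Import Order.TTheory GRing.Theory Num.Theory numFieldNormedType.Exports.
Local Open Scope classical_set_scope.
Local Open Scope ring_scope.

Lemma count_neq (c : seq nat) u : uniq c -> u \in c ->
  count (fun x => x != u) c = (size c).-1.
Proof.
move=> uc uin; have := count_predC (pred1 u) c.
rewrite (count_uniq_mem _ uc) uin => <-; rewrite add1n /=.
by apply: eq_count => x.
Qed.

Lemma deg_step s c w : pran_deg (pran_step s c) w =
  (pran_deg s w + count (fun x => (x == w) || (nv s == w)) c)%N.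
Proof. by rewrite /pran_deg /= count_cat count_map. Qed.

Definition cntc (s : pran_state) (w : nat) := count (fun c : seq nat => w \in c) (cliques s).

Lemma cntc_step s c w : cntc (pran_step s c) w =
  (cntc s w + count (fun u => (w == nv s) || ((w != u) && (w \in c))) c)%N.
Proof.
rewrite /cntc /= count_cat count_map; congr (_ + _)%N; apply: eq_count => u /=.
by rewrite in_cons mem_filter eq_sym.
Qed.

Lemma iotaSr n : iota 0 n.+1 = iota 0 n ++ [:: n].
Proof. by rewrite -addn1 iotaD. Qed.

Section Inv.
Variable d : nat.

Definition Inv (s : pran_state) : Prop :=
  [/\ (d.+2 <= nv s)%N,
      size (cliques s) = (d.+2 + (nv s - d.+2) * d.+1)%N,
      (forall c, c \in cliques s -> [/\ uniq c, size c = d.+1 & all (fun x => x < nv s)%N c]),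
      (forall w, (nv s <= w)%N -> pran_deg s w = 0%N) &
      (forall w, (w < nv s)%N -> (d.+1 <= pran_deg s w)%N /\ (cntc s w + d*d = d * pran_deg s w + 1)%N)].

Lemma Inv_step s c : Inv s -> c \in cliques s -> Inv (pran_step s c).
Proof.
move=> [h1 h2 h3 h4 h5] cin; have [uc sc ac] := h3 c cin.
have cnt0 : forall w, (nv s <= w)%N -> cntc s w = 0%N.
  move=> w hw; rewrite /cntc -(count_pred0 (cliques s)); apply: eq_in_count => c' /h3 [_ _ /allP a].
  by apply/negbTE/negP => /a; rewrite ltnNge hw.
split => /=.
- by apply: leqW.
- rewrite size_cat size_map h2 sc subSn //; lia.
- move=> c'; rewrite mem_cat => /orP [/h3 [u1 s1 a1] | /mapP [u uin ->]].
    by split => //; apply/allP => x /(allP a1) /ltnW.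
  split.
  + rewrite /= filter_uniq // andbT mem_filter negb_and; apply/orP; right.
    by apply/negP => /(allP ac); rewrite ltnn.
  + by rewrite /= size_filter count_neq // sc.
  + rewrite /= ltnSn /=; apply/allP => x; rewrite mem_filter => /andP [_ /(allP ac)].
    by move/ltnW.
- move=> w hw; rewrite deg_step h4; last by apply: ltnW.
  rewrite add0n -(count_pred0 c); apply: eq_in_count => x /(allP ac) xv /=.
  apply/negbTE; rewrite negb_or; apply/andP; split; apply/eqP => E; subst; lia.
- move=> w; rewrite ltnS leq_eqVlt => /orP [/eqP -> | wv].
    rewrite deg_step cntc_step h4 // cnt0 // add0n.
    have -> : count (fun x => (x == nv s) || (nv s == nv s)) c = size c.
      by rewrite -count_predT; apply: eq_count => x; rewrite eqxx orbT.
    have -> : count (fun u => (nv s == nv s) || ((nv s != u) && (nv s \in c))) c = size c.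
      by rewrite -count_predT; apply: eq_count => x; rewrite eqxx.
    rewrite sc; split => //; lia.
  have [hd he] := h5 w wv.
  rewrite deg_step cntc_step.
  have -> : count (fun x => (x == w) || (nv s == w)) c = (w \in c).
    rewrite -(count_uniq_mem _ uc); apply: eq_count => x /=.
    have -> : (nv s == w) = false by apply/eqP => E; lia.
    by rewrite orbF.
  have -> : count (fun u => (w == nv s) || ((w != u) && (w \in c))) c = if w \in c then d else 0%N.
    have -> : (w == nv s) = false by apply/eqP => E; lia.
    case wc: (w \in c) => /=.
      have := count_neq _ _ uc wc; rewrite sc /= => <-; apply: eq_count => x; rewrite andbT eq_sym //.
    by rewrite -(count_pred0 c); apply: eq_count => x; rewrite andbF.
  case: (w \in c) => /=; split; lia.
Qed.

Lemma H1 i n : count (fun j => (i < j)%N) (iota 0 n) = (n - i.+1)%N.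
Proof.
elim: n => // n IH; rewrite iotaSr count_cat IH /= addn0.
case: (ltnP i n) => h; lia.
Qed.

Lemma H2 i w n : count (fun j => j == w) [seq j <- iota 0 n | (i < j)%N] = ((i < w)%N && (w < n)%N : nat).
Proof.
rewrite count_filter; case: (ltnP i w) => h /=.
  transitivity (count (pred1 w) (iota 0 n)).
    by apply: eq_count => j /=; case: eqP => // ->; rewrite h.
  by rewrite count_uniq_mem ?iota_uniq // mem_iota.
transitivity (count pred0 (iota 0 n)); last by rewrite count_pred0.
apply: eq_count => j /=.
by case: eqP => // ->; rewrite ltnNge h.
Qed.

Lemma Hsum (w N m : nat) : sumn [seq (if i == w then (N - w.+1)%N else ((i < w)%N && (w < N)%N : nat)) | i <- iota 0 m] =
  if (w < N)%N then (if (m <= w)%N then m else (N - w.+1 + w)%N) else (if (m <= w)%N then 0%N else (N - w.+1)%N).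
Proof.
elim: m => [|m IH]; first by case: ifP.
rewrite iotaSr map_cat sumn_cat IH /= addn0.
by repeat (case: ifP => /= ?); lia.
Qed.

Lemma deg_init w : pran_deg (pran_init d) w = if (w < d.+2)%N then d.+1 else 0%N.
Proof.
rewrite /pran_deg /pran_init; move Hn: (d.+2) => n /=.
rewrite count_flatten -map_comp.
rewrite (@eq_map _ _ _ (fun i => if i == w then (n - w.+1)%N else ((i < w)%N && (w < n)%N : nat))); last first.
  move=> i /=; rewrite count_map.
  case: eqP => [->|hi].
    transitivity (count predT [seq j <- iota 0 n | (w < j)%N]).
      by apply: eq_count => j /=; rewrite eqxx.
    by rewrite count_predT size_filter H1.
  rewrite -H2; apply: eq_count => j /=; by have /eqP/negbTE -> := hi.
rewrite Hsum; by repeat (case: ifP => /= ?); lia.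
Qed.

Lemma Inv_init : Inv (pran_init d).
Proof.
split.
- by [].
- by rewrite size_map size_iota /= subnn mul0n addn0.
- move=> c /mapP [u uin ->]; split.
  + by rewrite filter_uniq // iota_uniq.
  + by rewrite size_filter count_neq ?iota_uniq // size_iota.
  + by apply/allP => x; rewrite mem_filter mem_iota => /andP [_ /andP [_ ->]].
- by move=> w h; rewrite deg_init ltnNge h.
- move=> w h; rewrite deg_init h; split => //.
  rewrite /cntc count_map.
  have -> : count (preim (fun u => [seq x <- iota 0 d.+2 | x != u]) (fun c : seq nat => w \in c)) (iota 0 d.+2) = count (fun u => u != w) (iota 0 d.+2).
    apply: eq_count => u; change ((w \in [seq x <- iota 0 d.+2 | x != u]) = (u != w)).
    have h' : (w < d.+2)%N := h.
    by rewrite mem_filter mem_iota leq0n add0n h' !andbT eq_sym.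
  rewrite count_neq ?iota_uniq ?mem_iota // size_iota /=; lia.
Qed.
End Inv.

Section Ex.
Variable R : realType.
Variable d : nat.

Definition avg (f : pran_state -> R) (s : pran_state) : R :=
  (size (cliques s))%:R^-1 *
      \sum_(i < size (cliques s)) f (pran_step s (nth [::] (cliques s) i)).

Fixpoint Ex (t : nat) (f : pran_state -> R) (s : pran_state) : R :=
  match t with 0 => f s | t'.+1 => Ex t' (avg f) s end.

Lemma Ex_pran t f : pran_expect d t f = Ex t f (pran_init d).
Proof. by elim: t f => //= t IH f; rewrite IH. Qed.

Definition Q (n : nat) (s : pran_state) := Inv d s /\ nv s = n.

Lemma Q_step n s i : Q n s -> (i < size (cliques s))%N ->
  Q n.+1 (pran_step s (nth [::] (cliques s) i)).
Proof.
move=> [hi hn] hs; split; last by rewrite /= hn.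
by apply: Inv_step => //; exact: mem_nth.
Qed.

Lemma Q_L n s : Q n s -> size (cliques s) = (d.+2 + (n - d.+2) * d.+1)%N.
Proof. by move=> [[_ h _ _ _] <-]. Qed.

Lemma Ex_congr t : forall n f g s, (forall s', Q (n + t) s' -> f s' = g s') -> Q n s ->
  Ex t f s = Ex t g s.
Proof.
elim: t => [|t IH] n f g s H Hs /=; first by apply: H; rewrite addn0.
apply: (IH n) => // s' Hs'; rewrite /avg; congr (_ * _); apply: eq_bigr => i _.
by apply: H; rewrite addnS; apply: Q_step.
Qed.

Lemma Ex_lin t : forall n f g (a b c : R) s, Q n s ->
  Ex t (fun s => a * f s + b * g s + c) s = a * Ex t f s + b * Ex t g s + c.
Proof.
elim: t => [|t IH] n f g a b c s Hs //=.
rewrite -(IH n (avg f) (avg g) a b c s Hs).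
apply: (@Ex_congr t n) => // s' Hs'.
rewrite /avg big_split big_split /= -!mulr_sumr /= sumr_const card_ord.
have L0 : (size (cliques s'))%:R != 0 :> R by rewrite (Q_L _ _ Hs') pnatr_eq0.
move: L0; set L := size _; set S1 := \sum_(i < L) _; set S2 := \sum_(i < L) _ => L0.
rewrite -mulr_natr; field; exact: L0.
Qed.


Lemma natr_count (T : Type) (a : pred T) (l : seq T) :
  (count a l)%:R = \sum_(x <- l) ((a x : nat)%:R : R).
Proof. by elim: l => [|x l IH]; rewrite ?big_nil ?big_cons //= natrD IH. Qed.

Lemma sum_bool (T : Type) (b : pred T) (h : bool -> R) (l : seq T) :
  \sum_(x <- l) h (b x) = h true * (count b l)%:R + h false * (count (predC b) l)%:R.
Proof.
elim: l => [|x l IH]; first by rewrite big_nil !mulr0 addr0.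
rewrite big_cons IH /=; case: (b x) => /=; rewrite !natrD; ring.
Qed.

Lemma sum_constR (T : Type) (x : R) (l : seq T) : \sum_(c <- l) x = (size l)%:R * x.
Proof. by elim: l => [|y l IH]; rewrite ?big_nil ?big_cons ?mul0r //= IH -natr1; ring. Qed.

Lemma cnt_lt s (c : seq nat) w : uniq c -> (w < nv s)%N ->
  count (fun x => (x == w) || (nv s == w)) c = (w \in c).
Proof.
move=> uc hw; rewrite -(count_uniq_mem _ uc); apply: eq_count => x /=.
have -> : (nv s == w) = false by apply/eqP => E; rewrite E ltnn in hw.
by rewrite orbF.
Qed.

Definition alpha (j : nat) : R := (d * j)%:R - (d * d)%:R + 1.

Lemma avg_N k s : Inv d s -> (0 < k)%N ->
  avg (fun s => (Ndeg k s)%:R) s =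
  (1 - alpha k / (size (cliques s))%:R) * (Ndeg k s)%:R +
  alpha k.-1 / (size (cliques s))%:R * (Ndeg k.-1 s)%:R + (k == d.+1)%:R.
Proof.
move=> [h1 h2 h3 h4 h5] k0.
have L0 : (size (cliques s))%:R != 0 :> R by rewrite h2 pnatr_eq0.
rewrite /avg.
have -> : \sum_(i < size (cliques s)) ((Ndeg k (pran_step s (nth [::] (cliques s) i)))%:R : R)
   = \sum_(c <- cliques s) (Ndeg k (pran_step s c))%:R by rewrite (big_nth [::]) big_mkord.
have E1 : forall c, c \in cliques s -> (Ndeg k (pran_step s c))%:R =
   \sum_(w <- iota 0 (nv s)) (((pran_deg s w + (w \in c))%N == k) : nat)%:R + ((d.+1 == k) : nat)%:R :> R.
  move=> c cin; have [uc sc ac] := h3 c cin.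
  rewrite /Ndeg [nv _]/= iotaSr count_cat natrD natr_count /= addn0.
  congr (_ + _).
    apply: eq_big_seq => w; rewrite mem_iota => /andP [_ hw].
    by rewrite deg_step cnt_lt.
  rewrite deg_step h4 // add0n.
  have -> : count (fun x => (x == nv s) || (nv s == nv s)) c = size c.
    by rewrite -count_predT; apply: eq_count => x; rewrite eqxx orbT.
  by rewrite sc.
rewrite (eq_big_seq _ E1) big_split /= sum_constR exchange_big /=.
set L := (size (cliques s))%:R in L0 *.
have E2 : forall w, w \in iota 0 (nv s) ->
   \sum_(c <- cliques s) (((pran_deg s w + (w \in c))%N == k) : nat)%:R =
   ((pran_deg s w == k) : nat)%:R * (L - alpha k) + ((pran_deg s w == k.-1) : nat)%:R * alpha k.-1 :> R.
  move=> w; rewrite mem_iota => /andP [_ hw].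
  have := sum_bool _ (fun c : seq nat => w \in c) (fun b : bool => (((pran_deg s w + b)%N == k) : nat)%:R : R) (cliques s).
  move=> /= ->.
  have hc := count_predC (fun c : seq nat => w \in c) (cliques s).
  have [hd he] := h5 w hw.
  have heR : (cntc s w)%:R = alpha (pran_deg s w).
    have := congr1 (fun n => n%:R : R) he; rewrite /= !natrD /alpha => H; lra.
  have hcR : (count (predC (fun c : seq nat => w \in c)) (cliques s))%:R = L - (cntc s w)%:R.
    have := congr1 (fun n => n%:R : R) hc; rewrite /= natrD /L /cntc => H; lra.
  rewrite hcR -/(cntc s w) heR addn0 addn1.
  have hkk : (k == k.-1) = false by rewrite -{1}(prednK k0) (gtn_eqF (ltnSn _)).
  have [-> | nk] := eqVneq (pran_deg s w) k.
    by rewrite hkk (gtn_eqF (ltnSn k)) /=; ring.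
  have [-> | nk'] := eqVneq (pran_deg s w) k.-1.
    have hkk' : (k.-1 == k) = false by rewrite eq_sym hkk.
    by rewrite prednK // eqxx /=; ring.
  have -> : ((pran_deg s w).+1 == k) = false.
    by apply/negbTE; apply: contra nk' => /eqP <-.
  rewrite /=; ring.
rewrite (eq_big_seq _ E2) big_split /= -!mulr_suml /Ndeg !natr_count.
rewrite eq_sym; field; exact: L0.
Qed.

Definition ee (t k : nat) : R := pran_expect d t (fun s => (Ndeg k s)%:R).

Lemma Q_init : Q d.+2 (pran_init d).
Proof. by split => //; exact: Inv_init. Qed.

Lemma e_rec t k : (0 < k)%N -> ee t.+1 k =
  (1 - alpha k / (d.+2 + t * d.+1)%:R) * ee t k +
  alpha k.-1 / (d.+2 + t * d.+1)%:R * ee t k.-1 + (k == d.+1)%:R.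
Proof.
move=> k0; rewrite /ee !Ex_pran /=.
rewrite -(@Ex_lin t d.+2 _ _ _ _ _ _ Q_init).
apply: (@Ex_congr t d.+2) => [s' Hs'|]; last exact: Q_init.
rewrite avg_N //; last by case: Hs'.
by rewrite (Q_L _ _ Hs') addKn.
Qed.

Lemma e_zero t : ee t d = 0.
Proof.
rewrite /ee Ex_pran.
transitivity (Ex t (fun s => 0 * (Ndeg d s)%:R + 0 * (Ndeg d s)%:R + 0) (pran_init d)).
  apply: (@Ex_congr t d.+2) => [s' [[_ _ _ _ h5] _]|]; last exact: Q_init.
  rewrite !mul0r !addr0; apply/eqP; rewrite pnatr_eq0 /Ndeg; apply/eqP.
  transitivity (count pred0 (iota 0 (nv s'))); last exact: count_pred0.
  apply: eq_in_count => w; rewrite mem_iota => /andP [_ hw] /=.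
  have [hd _] := h5 w hw; apply/negbTE; rewrite neq_ltn hd orbT //.
by rewrite (@Ex_lin t d.+2 _ _ _ _ _ _ Q_init) !mul0r !addr0.
Qed.
End Ex.
Section An.
Variable R : realType.

Lemma nearP (P : nat -> Prop) : (\forall t \near \oo, P t) -> exists N, forall n, (N <= n)%N -> P n.
Proof. move=> [N _ HN]. exists N => n Hn; exact: HN. Qed.

Lemma key (z eps r : nat -> R) (c : R) (T0 : nat) : 0 < c ->
  (forall t, (T0 <= t)%N -> `|r t| <= 1) ->
  (forall t, z t.+1 = r t * z t + eps t) -> eps @ \oo --> 0 ->
  (fun t => z t / (t%:R + c)) @ \oo --> 0.
Proof.
move=> c0 Hr Hz He; apply/cvgrPdist_le => e e0.
have e20 : 0 < e / 2 by rewrite divr_gt0.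
move/cvgrPdist_le: He => /(_ _ e20) /nearP [N HN].
set T := maxn T0 N.
have Hb : forall m, `|z (T + m)%N| <= `|z T| + m%:R * (e / 2).
  elim=> [|m IH]; first by rewrite addn0 mulr0n mul0r addr0.
  rewrite addnS Hz.
  have h1 : `|eps (T + m)%N| <= e / 2.
    by have := HN (T + m)%N; rewrite sub0r normrN; apply; exact: leq_trans (leq_maxr _ _) (leq_addr _ _).
  have h2 : `|r (T + m)%N| <= 1 by apply: Hr; exact: leq_trans (leq_maxl _ _) (leq_addr _ _).
  apply: (le_trans (ler_normD _ _)); rewrite normrM.
  have h3 : `|r (T + m)%N| * `|z (T + m)%N| <= `|z (T + m)%N|.
    by rewrite -{2}(mul1r `|z _|) ler_wpM2r.
  rewrite -natr1 mulrDl mul1r; lra.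
have := archi_boundP (normr_ge0 (z T) : 0 <= `|z T|) ; set M := Num.bound _ => HM.
exists (maxn T (M * 2 * (Num.bound (e^-1)))%N) => // t /= Ht.
have tT : (T <= t)%N by exact: leq_trans (leq_maxl _ _) Ht.
have hzt := Hb (t - T)%N; rewrite subnKC // in hzt.
have hm : (t - T)%:R <= t%:R :> R by rewrite ler_nat leq_subr.
have ie0 : 0 <= e^-1 by rewrite invr_ge0 ltW.
have hB := archi_boundP ie0; set B := Num.bound e^-1 in Ht hB.
have hB' : 1 < e * B%:R.
  by rewrite -{1}(mulfV (lt0r_neq0 e0)) ltr_pM2l.
have ht : (M * 2 * B)%:R <= t%:R :> R by rewrite ler_nat; exact: leq_trans (leq_maxr _ _) Ht.
rewrite !natrM in ht.
have tc : 0 < t%:R + c by rewrite ltr_pwDr.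
rewrite sub0r normrN normrM [`|_^-1|]ger0_norm ?invr_ge0 ?(ltW tc) // ler_pdivrMr //.
have hMe : M%:R <= M%:R * (e * B%:R) :> R by rewrite ler_peMr // ltW.
have h1 : (t - T)%:R * (e / 2) <= t%:R * (e/2) by rewrite ler_wpM2r // ltW.
have h2 : M%:R * (e * B%:R) <= t%:R * (e / 2).
  have -> : M%:R * (e * B%:R) = (M%:R * 2 * B%:R) * (e/2) by field.
  by rewrite ler_wpM2r // ltW.
have h3 : 0 <= e * c by rewrite mulr_ge0 // ltW.
lra.
Qed.

Lemma main_cvg (x b : nat -> R) (alpha gam bl : R) : 0 <= alpha -> 0 < gam ->
  (forall t, x t.+1 = (1 - alpha / (t%:R + gam)) * x t + b t) ->
  b @ \oo --> bl -> forall c, 0 < c ->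
  (fun t => x t / (t%:R + c)) @ \oo --> bl / (1 + alpha).
Proof.
move=> a0 g0 Hx Hb c c0.
set q := bl / (1 + alpha).
have a1 : 1 + alpha != 0 by rewrite lt0r_neq0 // ltr_pwDl.
have tg : forall t : nat, t%:R + gam != 0 by move=> t; rewrite lt0r_neq0 // ltr_pwDr.
pose z t := x t - q * (t%:R + gam).
have Hz : forall t, z t.+1 = (1 - alpha / (t%:R + gam)) * z t + (b t - bl).
  move=> t; rewrite /z Hx -natr1 /q; have := tg t; move: (t%:R) => u hu; field.
  by rewrite a1 hu.
have Heps : (fun t => b t - bl) @ \oo --> 0.
  by rewrite -(subrr bl); apply: cvgB => //; exact: cvg_cst.
have [T0 HT0] : exists T0 : nat, alpha <= T0%:R.
  by exists (Num.bound alpha); exact: ltW (archi_boundP a0).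
have Hr : forall t, (T0 <= t)%N -> `|1 - alpha / (t%:R + gam)| <= 1.
  move=> t Ht; have tg0 : 0 < t%:R + gam by rewrite ltr_pwDr.
  have h1 : alpha / (t%:R + gam) <= 1.
    rewrite ler_pdivrMr // mul1r; apply: le_trans HT0 _.
    by rewrite (le_trans _ (ltW (ltr_pwDr g0 (lexx _)))) // ler_nat.
  have h2 : 0 <= alpha / (t%:R + gam) by rewrite divr_ge0 // ltW.
  rewrite ger0_norm; lra.
have K1 := @key z _ _ c T0 c0 Hr Hz Heps.
have K2 : (fun t => q * (gam - c) / (t%:R + c)) @ \oo --> 0.
  apply: (@key (fun _ => q * (gam - c)) (fun _ => 0) (fun _ => 1) c 0%N c0).
  - by move=> *; rewrite normr1.
  - by move=> t; rewrite mul1r addr0.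
  - exact: cvg_cst.
have -> : (fun t => x t / (t%:R + c)) = (fun t => z t / (t%:R+c) + q*(gam-c)/(t%:R+c) + q).
  apply: funext => t; rewrite /z /=.
  have tc : t%:R + c != 0 by rewrite lt0r_neq0 // ltr_pwDr.
  move: (t%:R) tc => u hu; field; exact: hu.
have K3 : (fun t => z t / (t%:R+c) + q*(gam-c)/(t%:R+c) + q) @ \oo --> 0 + 0 + q.
  apply: cvgD; last exact: cvg_cst.
  exact: cvgD.
by rewrite !add0r in K3.
Qed.
End An.

Section Final.
Variable R : realType.
Variable d : nat.

Definition ratio (k : nat) : R :=
  ((d * k)%:R - (d * d)%:R - d%:R + 1) / ((d * k)%:R - (d * d)%:R + d%:R + 2).

Fixpoint Pf (k : nat) : R :=
  match k with 0 => 1 / 2 | k'.+1 => if (k' <= d)%N then 1 / 2 else ratio k'.+1 * Pf k' end.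

Let D : R := (d.+1)%:R.
Let G : R := (d.+2)%:R / (d.+1)%:R.

Lemma D0 : D != 0. Proof. by rewrite /D pnatr_eq0. Qed.
Lemma G0 : 0 < G. Proof. by rewrite /G divr_gt0 // ltr0n. Qed.

Lemma alpha_ge0 k : (d <= k)%N -> 0 <= alpha R d k.
Proof.
move=> h; rewrite /alpha.
have : (d * d)%:R <= (d * k)%:R :> R by rewrite ler_nat leq_mul2l h orbT.
lra.
Qed.

Lemma step_cvg k (bl : R) : (d.+1 <= k)%N ->
  (fun t => alpha R d k.-1 / D * (ee R d t k.-1 / (t%:R + G)) + (k == d.+1)%:R) @ \oo --> bl ->
  forall c, 0 < c -> (fun t => ee R d t k / (t%:R + c)) @ \oo --> bl / (1 + alpha R d k / D).
Proof.
move=> hk hb c c0; apply: (@main_cvg R _ _ _ G _ _ G0 _ hb c c0).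
  by rewrite divr_ge0 ?alpha_ge0 ?ler0n // ltnW.
move=> t; rewrite e_rec; last by apply: leq_trans hk.
have hL : (d.+2 + t * d.+1)%:R = D * (t%:R + G) :> R.
  rewrite /D /G natrD natrM; field.
  by rewrite addrC natr1 pnatr_eq0.
have tG : t%:R + G != 0 by rewrite lt0r_neq0 // ltr_pwDr // G0.
rewrite hL; field.
by rewrite tG addrC natr1 pnatr_eq0.
Qed.

Lemma claim m : forall c : R, 0 < c ->
  (fun t => ee R d t (d.+1 + m) / (t%:R + c)) @ \oo --> Pf (d.+1 + m).
Proof.
elim: m => [|m IH] c c0.
  rewrite addn0.
  have -> : Pf d.+1 = 1 / (1 + alpha R d d.+1 / D).
    rewrite /= leqnn /alpha /D mulnS natrD; field.
    have hd : 0 <= d%:R :> R by rewrite ler0n.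
    by apply/andP; split; apply: lt0r_neq0; lra.
  apply: step_cvg => //.
  have -> : (fun t => alpha R d d.+1.-1 / D * (ee R d t d.+1.-1 / (t%:R + G)) + (d.+1 == d.+1)%:R) = (fun=> 1).
    by apply: funext => t /=; rewrite e_zero mul0r mulr0 add0r eqxx.
  exact: cvg_cst.
rewrite addnS.
set k' := (d.+1 + m)%N in IH *.
have hk' : (d < k')%N by rewrite /k' addSn ltnS leq_addr.
have -> : Pf k'.+1 = (alpha R d k' / D * Pf k' + 0) / (1 + alpha R d k'.+1 / D).
  rewrite /= leqNgt hk' /= /ratio /alpha /D mulnS natrD.
  have h1 : (d * d)%:R <= (d * k')%:R :> R by rewrite ler_nat leq_mul2l ltnW ?orbT.
  move: ((d * d)%:R) ((d * k')%:R) h1 => A B h1.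
  have hd : 0 <= d%:R :> R by rewrite ler0n.
  rewrite addr0 -natr1; field.
  apply/andP; split; apply: lt0r_neq0; lra.
have hf : (k'.+1 == d.+1) = false by rewrite eqSS gtn_eqF.
apply: step_cvg; first exact: ltnW.
rewrite hf /=.
apply: cvgD; last exact: cvg_cst.
apply: cvgM; first exact: cvg_cst.
exact: IH G0.
exact: c0.
Qed.

End Final.

Theorem mainTheorem3 (R : realType) (d : nat) (hd : (1 <= d)%N) :
  exists P : nat -> R,
    (forall k : nat, (d.+1 <= k)%N ->
       (fun t : nat => pran_expect d t (fun s => (Ndeg k s)%:R) / (d + 2 + t)%:R)
         @ \oo --> P k) /\
    P d.+1 = 1 / 2 /\
    (forall k : nat, (d.+1 < k)%N ->
       P k = ((d * k)%:R - (d * d)%:R - d%:R + 1) /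
             ((d * k)%:R - (d * d)%:R + d%:R + 2) * P k.-1).
Proof.
exists (Pf R d); split; [|split].
- move=> k hk.
  have c0 : (0 : R) < (d + 2)%:R by rewrite ltr0n addn2.
  have := claim R d (k - d.+1) _ c0.
  rewrite subnKC //.
  have -> : (fun t => ee R d t k / (t%:R + (d + 2)%:R)) =
            (fun t => pran_expect d t (fun s => (Ndeg k s)%:R) / (d + 2 + t)%:R).
    apply: funext => t; rewrite /ee.
    by rewrite [in RHS]natrD addrC.
  by [].
- by rewrite /= leqnn.
- case=> // k hk; rewrite /= leqNgt -ltnS hk.
  by [].
Qed.
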